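(* For every $n\ge1$, $D(\alpha).Q_n(\alpha)=(\alpha^2n^2-n\alpha)Q_n(\alpha)$.
   Context: $F=\mathbb{Q}(\alpha)$, $\Lambda_F=F[p_1,p_2,\dots]$ with $p_n$ the power sums. For a partition $\lambda$ with $m_i$ parts equal to $i$, $l(\lambda)$ is its number of parts, $z_\lambda=\prod_i i^{m_i}m_i!$, $p_\lambda=\prod p_{\lambda_i}$. $Q_n(\alpha)=\sum_{\lambda\vdash n}\alpha^{-l(\lambda)}z_\lambda^{-1}p_\lambda$. The operator $$D(\alpha)=\sum_{i,j\ge1}(i+j)\alpha\,p_ip_j\frac{\partial}{\partial p_{i+j}}+\sum_{i,j\ge1}ij\alpha^2p_{i+j}\frac{\partial^2}{\partial p_i\partial p_j}+\alpha(\alpha-1)\sum_{k\ge1}k^2p_k\frac{\partial}{\partial p_k}.$$ *)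

(* Defs.v *)
From mathcomp Require Import all_boot all_order all_algebra.
From mathcomp Require Import fraction.
From mathcomp Require Import mpoly.
Set Implicit Arguments. Unset Strict Implicit. Unset Printing Implicit Defensive.
Import GRing.Theory.
Local Open Scope ring_scope.

Definition F : fieldType := {fraction {poly rat}}.
Definition alpha : F := tofrac ('X : {poly rat}).

(* Lambda_F restricted to the power sums p_1, ..., p_N :
   {mpoly F[N]}, where the variable 'X_k (k : 'I_N) stands for p_(k+1). *)

(* The operator D(alpha), on F[p_1,...,p_N].  Index conventions:
   'X_i = p_(i+1), 'X_j = p_(j+1), 'X_k = p_(k+1) with k = i+j+1,
   i.e. (i+1)+(j+1) = k+1. *)
Definition Dop (N : nat) (f : {mpoly F[N]}) : {mpoly F[N]} :=
  \sum_(i < N) \sum_(j < N) \sum_(k < N | (i + j + 1)%N == k)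
      ((k.+1)%:R * alpha) *: ('X_i * 'X_j * mderiv k f)
  + \sum_(i < N) \sum_(j < N) \sum_(k < N | (i + j + 1)%N == k)
      ((i.+1 * j.+1)%:R * alpha ^+ 2) *: ('X_k * mderiv i (mderiv j f))
  + (alpha * (alpha - 1)) *:
      \sum_(k < N) ((k.+1 ^ 2)%:R : F) *: ('X_k * mderiv k f).

(* A partition lambda of n with all parts <= N is encoded by its multiplicity
   vector m : 'I_N -> nat, m k = number of parts equal to k+1 (each m k <= n),
   subject to sum_k (k+1) m_k = n. *)
Definition is_partn (N n : nat) (m : {ffun 'I_N -> 'I_n.+1}) : bool :=
  (\sum_(k < N) k.+1 * m k)%N == n.

Definition part_len (N n : nat) (m : {ffun 'I_N -> 'I_n.+1}) : nat :=
  (\sum_(k < N) m k)%N.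

Definition zee (N n : nat) (m : {ffun 'I_N -> 'I_n.+1}) : nat :=
  (\prod_(k < N) (k.+1 ^ m k * (m k)`!))%N.

Definition p_part (N n : nat) (m : {ffun 'I_N -> 'I_n.+1}) : {mpoly F[N]} :=
  \prod_(k < N) 'X_k ^+ m k.

Definition Qn (N n : nat) : {mpoly F[N]} :=
  \sum_(m : {ffun 'I_N -> 'I_n.+1} | is_partn m)
     ((alpha ^+ part_len m)^-1 * ((zee m)%:R)^-1) *: p_part m.

(* Main.v *)
Require Import Defs.
From mathcomp Require Import all_boot all_order all_algebra.
From mathcomp Require Import fraction.
From mathcomp Require Import mpoly.
From mathcomp Require Import ring zify.
Import GRing.Theory.
Local Open Scope ring_scope.

Set Implicit Arguments. Unset Strict Implicit. Unset Printing Implicit Defensive.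

Definition zN N (v : 'I_N -> nat) : nat := (\prod_(t < N) (t.+1 ^ v t * (v t)`!))%N.

Lemma zN_step N (v w : 'I_N -> nat) s :
  (forall t, w t = v t + (t == s))%N -> zN w = (zN v * (s.+1 * w s))%N.
Proof.
move=> e; rewrite /zN (bigD1 s) //= [in RHS](bigD1 s) //=.
rewrite (eq_bigr (fun t : 'I_N => t.+1 ^ v t * (v t)`!)%N); last first.
  by move=> t /negbTE ts; rewrite e ts addn0.
rewrite e eqxx addn1 expnS factS; ring.
Qed.

Lemma sum_delta N (g : 'I_N -> nat) (x : 'I_N) : (\sum_(t < N) g t * (t == x))%N = g x.
Proof.
rewrite (bigD1 x) //= eqxx muln1 big1 ?addn0 //.
by move=> t /negbTE ->; rewrite muln0.
Qed.

Lemma sum_delta' N (g : 'I_N -> nat) (x : 'I_N) : (\sum_(t < N) g t * (x == t))%N = g x.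
Proof. by rewrite -(sum_delta g x); apply: eq_bigr => t _; rewrite eq_sym. Qed.

Lemma wsum N (v w g : 'I_N -> nat) (i j k : 'I_N) :
  (forall t, w t + (t == k) = v t + (t == j) + (t == i))%N ->
  (\sum_t g t * w t + g k = \sum_t g t * v t + g j + g i)%N.
Proof.
move=> e; rewrite -{1}(sum_delta g k) -big_split /=.
rewrite (eq_bigr (fun t : 'I_N => g t * v t + g t * (t == j) + g t * (t == i))%N).
  by rewrite !big_split /= !sum_delta.
by move=> t _; rewrite -!mulnDr e.
Qed.

Lemma bound_of_sum N n (w : 'I_N -> nat) :
  (\sum_(t < N) t.+1 * w t)%N = n -> forall t, (w t <= n)%N.
Proof.
move=> e t; rewrite -e (bigD1 t) //=; apply: leq_trans (leq_addr _ _).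
exact: leq_pmull.
Qed.

Lemma relP (x y : nat) (bk bj bi : bool) : ~~ (bk && bj) -> ~~ (bk && bi) ->
  (y + bk = x + bj + bi)%N -> (x - bk + bj + bi = y)%N /\ (y - bj - bi + bk = x)%N.
Proof. by case: bk; case: bj; case: bi => //= _ _; lia. Qed.

Lemma spP (x : nat) (bk bj bi : bool) : (bk -> 0 < x)%N ->
  (x - bk + bj + bi + bk = x + bj + bi)%N.
Proof. by case: bk => [/(_ isT)|_]; case: bj; case: bi => //=; lia. Qed.

Lemma jnP (y : nat) (bk bj bi : bool) : (bj + bi <= y)%N ->
  (y - bj - bi + bk + bj + bi = y + bk)%N.
Proof. by case: bk; case: bj; case: bi => //=; lia. Qed.

Definition spN N n (i j k : 'I_N) (m : {ffun 'I_N -> 'I_n.+1}) (t : 'I_N) : nat :=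
  ((m t - (t == k)) + (t == j) + (t == i))%N.
Definition jnN N n (i j k : 'I_N) (m : {ffun 'I_N -> 'I_n.+1}) (t : 'I_N) : nat :=
  ((m t - (t == j)) - (t == i) + (t == k))%N.
Definition rel N n (i j k : 'I_N) (m mu : {ffun 'I_N -> 'I_n.+1}) :=
  forall t, (mu t + (t == k) = m t + (t == j) + (t == i))%N.

Lemma neqs N (i j k : 'I_N) : (i + j + 1)%N = k ->
  [/\ (i == k) = false, (j == k) = false, (k == i) = false & (k == j) = false].
Proof.
move=> hk; split; apply/negbTE/eqP => e; rewrite ?e in hk; rewrite -?e in hk; lia.
Qed.

Lemma rel_props N n (i j k : 'I_N) (hk : (i + j + 1)%N = k) (m mu : {ffun 'I_N -> 'I_n.+1}) :
  rel i j k m mu ->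
  [/\ (forall t, spN i j k m t = mu t), (forall t, jnN i j k mu t = m t),
      (0 < m k)%N, (0 < mu j * (mu i - (i == j)))%N & is_partn m = is_partn mu].
Proof.
move=> r; have [nik njk nki nkj] := neqs hk.
have ne t : ~~ ((t == k) && (t == j)) /\ ~~ ((t == k) && (t == i)).
  by case: (eqVneq t k) => [->|//]; rewrite nkj nki.
split.
- by move=> t; have [[]] := ne t; move/relP => h /h /(_ (r t)) [].
- by move=> t; have [[]] := ne t; move/relP => h /h /(_ (r t)) [].
- by have := r k; rewrite eqxx nkj nki /=; lia.
- have ri := r i; have rj := r j; rewrite eqxx nik in ri; rewrite eqxx njk in rj.
  case: (eqVneq i j) => [eij|nij].
    rewrite -eij eqxx in rj *; rewrite muln_gt0 /=; lia.
  rewrite (negbTE nij) /= in ri *; rewrite eq_sym (negbTE nij) /= in rj.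
  rewrite muln_gt0; lia.
- have e := wsum (fun t : 'I_N => t.+1) r; cbv beta in e.
  have h1 : (k.+1 = j.+1 + i.+1)%N by lia.
  have hh : (\sum_(t < N) t.+1 * mu t = \sum_(t < N) t.+1 * m t)%N.
    by apply/eqP; rewrite -(eqn_add2r k.+1) e h1 addnA.
  by rewrite /is_partn hh.
Qed.

Definition phi N n (i j k : 'I_N) (m : {ffun 'I_N -> 'I_n.+1}) : {ffun 'I_N -> 'I_n.+1} :=
  [ffun t => inord (spN i j k m t)].
Definition psi N n (i j k : 'I_N) (m : {ffun 'I_N -> 'I_n.+1}) : {ffun 'I_N -> 'I_n.+1} :=
  [ffun t => inord (jnN i j k m t)].

Lemma phi_rel N n (i j k : 'I_N) (hk : (i + j + 1)%N = k) (m : {ffun 'I_N -> 'I_n.+1}) :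
  is_partn m -> (0 < m k)%N -> rel i j k m (phi i j k m).
Proof.
move=> Pm mk.
have sp t : (spN i j k m t + (t == k) = m t + (t == j) + (t == i))%N.
  by rewrite /spN; apply: spP => /eqP ->.
have e := wsum (fun t : 'I_N => t.+1) sp; cbv beta in e.
have h1 : (k.+1 = j.+1 + i.+1)%N by lia.
have hs : (\sum_(t < N) t.+1 * spN i j k m t = n)%N.
  by apply/eqP; rewrite -(eqn_add2r k.+1) e h1 addnA (eqP Pm).
move=> t; rewrite ffunE inordK; first exact: sp.
by rewrite ltnS; apply: bound_of_sum hs t.
Qed.

Lemma psi_rel N n (i j k : 'I_N) (hk : (i + j + 1)%N = k) (mu : {ffun 'I_N -> 'I_n.+1}) :
  is_partn mu -> (0 < mu j * (mu i - (i == j)))%N -> rel i j k (psi i j k mu) mu.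
Proof.
move=> Pm; rewrite muln_gt0 => /andP [hj hi].
have jn t : (mu t + (t == k) = jnN i j k mu t + (t == j) + (t == i))%N.
  rewrite /jnN jnP //.
  case: eqP => [etj|_]; case: eqP => [eti|_] /=.
  - rewrite etj in eti; rewrite -eti eqxx /= in hi; rewrite etj; lia.
  - by rewrite etj; lia.
  - by rewrite eti; move: hi; case: (i == j) => /=; lia.
  - by [].
have e := wsum (fun t : 'I_N => t.+1) jn; cbv beta in e.
have h1 : (k.+1 = j.+1 + i.+1)%N by lia.
have hs : (\sum_(t < N) t.+1 * jnN i j k mu t = n)%N.
  by apply/eqP; rewrite -(eqn_add2r (j.+1 + i.+1)) addnA -e (eqP Pm) h1 addnA.
move=> t; rewrite ffunE inordK; first exact: jn.
by rewrite ltnS; apply: bound_of_sum hs t.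
Qed.

Lemma phi_psi N n (i j k : 'I_N) (hk : (i + j + 1)%N = k) (m mu : {ffun 'I_N -> 'I_n.+1}) :
  rel i j k m mu -> phi i j k m = mu /\ psi i j k mu = m.
Proof.
move=> r; have [e1 e2 _ _ _] := rel_props hk r.
by split; apply/ffunP => t; rewrite ffunE ?e1 ?e2 inord_val.
Qed.

Lemma alpha_neq0 : alpha != 0.
Proof. by rewrite /alpha tofrac_eq0 polyX_eq0. Qed.

Lemma natF_neq0 m : (0 < m)%N -> (m%:R : F) != 0.
Proof.
move=> hm; rewrite -tofrac1 -tofracMn tofrac_eq0 -polyC1 -polyCMn polyC_eq0.
by rewrite Num.Theory.pnatr_eq0 -lt0n.
Qed.

Definition cf N n (m : {ffun 'I_N -> 'I_n.+1}) : F :=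
  (alpha ^+ part_len m)^-1 * ((zee m)%:R)^-1.

Lemma zee_gt0 N n (m : {ffun 'I_N -> 'I_n.+1}) : (0 < zee m)%N.
Proof. by apply: prodn_gt0 => t; rewrite muln_gt0 expn_gt0 fact_gt0. Qed.

Lemma sum_mul1 N (w : 'I_N -> nat) : (\sum_(t < N) 1 * w t = \sum_(t < N) w t)%N.
Proof. by apply: eq_bigr => t _; rewrite mul1n. Qed.

Lemma field_aux (R : fieldType) (a A Z Zm K : R) : a != 0 -> A != 0 -> Z != 0 -> Zm != 0 ->
  A^-1 * Z^-1 * (a * K) = (a * A)^-1 * Zm^-1 * (a ^+ 2 * (Zm * K / Z)).
Proof. by move=> h1 h2 h3 h4; field; rewrite h1 h2 h3 h4. Qed.

Lemma cf_rel N n (i j k : 'I_N) (hk : (i + j + 1)%N = k) (m mu : {ffun 'I_N -> 'I_n.+1}) :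
  rel i j k m mu ->
  cf m * (alpha * (k.+1 * m k)%:R) =
  cf mu * (alpha ^+ 2 * (i.+1 * j.+1 * (mu j * (mu i - (i == j))))%:R).
Proof.
move=> r; have [e1 e2 mk _ _] := rel_props hk r.
have [nik njk nki nkj] := neqs hk.
have hl : part_len mu = (part_len m).+1.
  have e := wsum (fun=> 1%N) r; cbv beta in e.
  rewrite !sum_mul1 in e; rewrite /part_len.
  by move/eqP: e; rewrite eqn_add2r addn1 => /eqP.
pose m' := fun t : 'I_N => (m t - (t == k))%N.
pose m'' := fun t : 'I_N => (m' t + (t == j))%N.
have z1 : zee m = (zN m' * (k.+1 * m k))%N.
  apply: (zN_step (w := fun t => nat_of_ord (m t))) => t; rewrite /m'.
  by case: eqP => [->|] /=; lia.
have z2 : zN m'' = (zN m' * (j.+1 * m'' j))%N by apply: zN_step.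
have z3 : zee mu = (zN m'' * (i.+1 * mu i))%N.
  by apply: (zN_step (w := fun t => nat_of_ord (mu t))) => t; rewrite -e1.
have ej : m'' j = (m j).+1 by rewrite /m'' /m' eqxx njk subn0 addn1.
have ex : (m'' j * mu i = mu j * (mu i - (i == j)))%N.
  have := e1 j; have := e1 i; rewrite /spN /m'' /m' njk nik eqxx subn0.
  case: (eqVneq i j) => [<-|/negbTE nij]; rewrite ?eqxx ?nij ?(eq_sym j i) ?nij /=.
    move=> <- _; rewrite addn1 addn1 subn1 /=; lia.
  by move=> _ <-; rewrite !subn0 addn0.
have hz : (zee mu * (k.+1 * m k) = zee m * (i.+1 * j.+1 * (mu j * (mu i - (i == j)))))%N.
  by rewrite z3 z2 z1 -ex; ring.
have hz' : ((zee mu)%:R * (k.+1 * m k)%:R =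
            (zee m)%:R * (i.+1 * j.+1 * (mu j * (mu i - (i == j))))%:R :> F).
  by rewrite -!natrM hz.
have Zm : ((zee m)%:R : F) != 0 by apply: natF_neq0; apply: zee_gt0.
have Zmu : ((zee mu)%:R : F) != 0 by apply: natF_neq0; apply: zee_gt0.
have hX : ((i.+1 * j.+1 * (mu j * (mu i - (i == j))))%:R : F) =
          (zee mu)%:R * (k.+1 * m k)%:R / (zee m)%:R.
  by rewrite hz' [_ * _%:R]mulrC mulfK.
rewrite /cf hl exprS hX.
have aln : alpha ^+ part_len m != 0 by apply: expf_neq0; exact: alpha_neq0.
exact: (@field_aux F alpha (alpha ^+ part_len m) ((zee m)%:R) ((zee mu)%:R) ((k.+1 * m k)%:R) alpha_neq0 aln Zm Zmu).
Qed.

Lemma reidx N n (i j k : 'I_N) (hk : (i + j + 1)%N = k)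
  (H : ('I_N -> nat) -> ('I_N -> nat) -> {mpoly F[N]})
  (Hext : forall v v' w w', v =1 v' -> w =1 w' -> H v w = H v' w') :
  \sum_(m : {ffun 'I_N -> 'I_n.+1} | is_partn m)
     (cf m * (alpha * (k.+1 * m k)%:R)) *: H (fun t => nat_of_ord (m t)) (spN i j k m)
  = \sum_(mu : {ffun 'I_N -> 'I_n.+1} | is_partn mu)
     (cf mu * (alpha ^+ 2 * (i.+1 * j.+1 * (mu j * (mu i - (i == j))))%:R))
       *: H (jnN i j k mu) (fun t => nat_of_ord (mu t)).
Proof.
rewrite (bigID (fun m : {ffun 'I_N -> 'I_n.+1} => 0 < m k)%N) /= [X in _ + X]big1 ?addr0; last first.
  by move=> m /andP [_]; rewrite lt0n negbK => /eqP ->; rewrite muln0 mulr0 mulr0 scale0r.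
rewrite [RHS](bigID (fun mu : {ffun 'I_N -> 'I_n.+1} => 0 < mu j * (mu i - (i == j)))%N) /=.
rewrite [X in _ = _ + X]big1 ?addr0; last first.
  by move=> mu /andP [_]; rewrite lt0n negbK => /eqP ->; rewrite muln0 mulr0 mulr0 scale0r.
rewrite (reindex_onto (psi i j k) (phi i j k)) /=; last first.
  by move=> m /andP [Pm mk]; have [] := phi_psi hk (phi_rel hk Pm mk).
apply: eq_big => [mu|mu /andP [/andP [Pm mk] /eqP e]].
  apply/idP/idP.
  - move=> /andP [/andP [Pm mk] /eqP e]; have r := phi_rel hk Pm mk; rewrite e in r.
    by have [_ _ _ hp ePm] := rel_props hk r; rewrite hp -ePm Pm.
  - move=> /andP [Pmu hmu]; have r := psi_rel hk Pmu hmu.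
    have [_ _ mk _ ePm] := rel_props hk r; have [-> _] := phi_psi hk r.
    by rewrite ePm Pmu mk eqxx.
have r := phi_rel hk Pm mk; rewrite e in r; have [e1 e2 _ _ _] := rel_props hk r.
rewrite (cf_rel hk r); congr (_ *: _); apply: Hext => t //; by rewrite ?e1 ?e2.
Qed.

Local Close Scope ring_scope.

Lemma sum_k_const N (a x : nat) :
  (\sum_(k < N | a == k) x = if a < N then x else 0)%N.
Proof.
case: ifP => ha.
  rewrite (bigD1 (Ordinal ha)) //= big1 ?addn0 // => k /andP [/eqP e].
  by rewrite (_ : k = Ordinal ha) ?eqxx //; apply: val_inj.
by apply: big1 => k /eqP e; move: ha; rewrite e ltn_ord.
Qed.

Lemma N1 N n (m : {ffun 'I_N -> 'I_n.+1}) : is_partn m -> (n <= N)%N ->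
  (\sum_(i < N) \sum_(j < N) \sum_(k < N | (i + j + 1)%N == k)
      (i.+1 * j.+1 * (m j * (m i - (i == j)))) + \sum_(k < N) k.+1 ^ 2 * m k = n ^ 2)%N.
Proof.
move=> /eqP hs hN.
have g0 (i j : 'I_N) : ~~ (i + j + 1 < N)%N -> (m j * (m i - (i == j)) = 0)%N.
  move=> h; apply/eqP; rewrite muln_eq0; apply/negPn/negP => /norP [hj hi].
  case: (eqVneq i j) => [eij|nij].
    rewrite -eij eqxx in hi hj *.
    have b : (i.+1 * m i <= n)%N.
      rewrite -[X in (_ <= X)%N]hs (bigD1 i) //=; exact: leq_addr.
    move: h hi; rewrite -eij /=; nia.
  have b : (i.+1 * m i + j.+1 * m j <= n)%N.
    rewrite -[X in (_ <= X)%N]hs (bigD1 i) //= (bigD1 j) /= ?(eq_sym j i) ?nij // addnA; exact: leq_addr.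
  move: hi h; rewrite (negbTE nij) /=; nia.
rewrite (eq_bigr (fun i : 'I_N => \sum_(j < N) i.+1 * j.+1 * (m j * (m i - (i == j))))%N);
  last first.
  move=> i _; apply: eq_bigr => j _; rewrite sum_k_const; case: ifP => // /negbT /g0 ->.
  by rewrite muln0.
rewrite -big_split /=.
rewrite (eq_bigr (fun i : 'I_N => i.+1 * m i * \sum_(j < N) j.+1 * m j)%N); last first.
  move=> i _.
  rewrite (_ : (i.+1 ^ 2 * m i = \sum_(j < N) (i.+1 * j.+1 * m j) * (i == j))%N); last first.
    by rewrite sum_delta' mulnn -mulnA.
  rewrite -big_split big_distrr /=; apply: eq_bigr => j _.
  case: (eqVneq i j) => [<-|nij] /=; last by rewrite subn0 muln0 addn0; nia.
  rewrite muln1; case: (nat_of_ord (m i)) => [|x]; first by rewrite !muln0.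
  rewrite subn1 /=; nia.
by rewrite -big_distrl /= hs mulnn.
Qed.

Lemma count_j N (i k : 'I_N) : (\sum_(j < N) ((i + j + 1)%N == k) = (i < k))%N.
Proof.
case: (ltnP i k) => hik.
  have hj : (k - i.+1 < N)%N by have := ltn_ord k; lia.
  rewrite (bigD1 (Ordinal hj)) /=; last by [].
  rewrite (_ : (i + (k - i.+1) + 1 == k) = true); last by apply/eqP; lia.
  rewrite big1 // => j /eqP nj; case: eqP => // e; exfalso; apply: nj.
  by apply: val_inj => /=; lia.
by apply: big1 => j _; case: eqP => // e; lia.
Qed.

Lemma count_ij N (k : 'I_N) : (\sum_(i < N) \sum_(j < N) ((i + j + 1)%N == k) = k)%N.
Proof.
rewrite (eq_bigr (fun i : 'I_N => (i < k) : nat)); last by move=> i _; apply: count_j.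
rewrite -(big_mkord xpredT (fun i => (i < k) : nat)) (big_cat_nat _ (n := k)) //=;
  last exact: ltnW.
rewrite (eq_big_nat _ _ (F2 := fun=> 1%N)); last by move=> i /andP [_ ->].
rewrite [X in (_ + X)%N](eq_big_nat _ _ (F2 := fun=> 0%N)); last first.
  by move=> i /andP [h _]; rewrite ltnNge h.
by rewrite !sum_nat_const_nat muln1 muln0 addn0 subn0.
Qed.

Lemma N2 N n (m : {ffun 'I_N -> 'I_n.+1}) : is_partn m ->
  (\sum_(i < N) \sum_(j < N) \sum_(k < N | (i + j + 1)%N == k) (k.+1 * m k) + n
     = \sum_(k < N) k.+1 ^ 2 * m k)%N.
Proof.
move=> /eqP hs.
rewrite (eq_bigr (fun i : 'I_N => \sum_(j < N) \sum_(k < N) (k.+1 * m k) * ((i + j + 1)%N == k)))%N;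
  last first.
  move=> i _; apply: eq_bigr => j _; rewrite big_mkcond /=; apply: eq_bigr => k _.
  by case: ifP; rewrite ?muln1 ?muln0.
rewrite (eq_bigr (fun i : 'I_N => \sum_(k < N) \sum_(j < N) (k.+1 * m k) * ((i + j + 1)%N == k)))%N;
  last by move=> i _; rewrite exchange_big.
rewrite exchange_big /=.
rewrite (eq_bigr (fun k : 'I_N => k * (k.+1 * m k)))%N; last first.
  move=> k _; rewrite (eq_bigr (fun i : 'I_N => (k.+1 * m k) * \sum_(j < N) ((i + j + 1)%N == k)))%N;
    last by move=> i _; rewrite big_distrr.
  by rewrite -big_distrr /= count_ij mulnC.
rewrite -[X in (_ + X)%N]hs -big_split /=; apply: eq_bigr => k _; nia.
Qed.

Local Open Scope ring_scope.

Definition mon (N : nat) (v : 'I_N -> nat) : {mpoly F[N]} := \prod_(t < N) 'X_t ^+ v t.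

Lemma monE N (v : 'I_N -> nat) : mon v = 'X_[[multinom v t | t < N]].
Proof. by rewrite mpolyXE_id; apply eq_bigr => t _; rewrite mnmE. Qed.

Lemma eq_mon N (v w : 'I_N -> nat) : v =1 w -> mon v = mon w.
Proof. by move=> e; apply eq_bigr => t _; rewrite e. Qed.

Lemma mderiv_mon N k (v : 'I_N -> nat) :
  mderiv k (mon v) = (v k)%:R *: mon (fun t => (v t - (t == k))%N).
Proof.
rewrite !monE mderivX mnmE; congr (_ *: 'X_[_]); apply/mnmP => t.
by rewrite mnmBE !mnmE eq_sym.
Qed.

Lemma mulX_mon N i (v : 'I_N -> nat) : 'X_i * mon v = mon (fun t => (v t + (t == i))%N).
Proof.
rewrite !monE -mpolyXD; congr 'X_[_]; apply/mnmP => t.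
by rewrite mnmDE !mnmE eq_sym addnC.
Qed.

Lemma QnE N n : Qn N n = \sum_(m : {ffun 'I_N -> 'I_n.+1} | is_partn m)
   cf m *: mon (fun t => nat_of_ord (m t)).
Proof. by apply: eq_bigr. Qed.

Lemma dQ N n k : mderiv k (Qn N n) = \sum_(m : {ffun 'I_N -> 'I_n.+1} | is_partn m)
   (cf m * (m k)%:R) *: mon (fun t => (m t - (t == k))%N).
Proof.
rewrite QnE raddf_sum; apply: eq_bigr => m _.
by rewrite /= mderivZ mderiv_mon scalerA.
Qed.

Lemma sc1 (R : comRingType) (K a c M : R) : (K * a) * (c * M) = c * (a * (K * M)).
Proof. by ring. Qed.

Lemma T1 N n (i j k : 'I_N) :
  ((k.+1)%:R * alpha) *: ('X_i * 'X_j * mderiv k (Qn N n)) =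
  \sum_(m : {ffun 'I_N -> 'I_n.+1} | is_partn m)
     (cf m * (alpha * (k.+1 * m k)%:R)) *: mon (spN i j k m).
Proof.
rewrite dQ mulr_sumr scaler_sumr; apply: eq_bigr => m _.
rewrite -scalerAr -[('X_i * 'X_j * _)]mulrA mulX_mon mulX_mon scalerA natrM sc1.
by [].
Qed.

Lemma sc2 (R : comRingType) (K a c M L : R) :
  (K * a) * ((c * M) * L) = c * (a * (K * (M * L))).
Proof. by ring. Qed.

Lemma T2 N n (i j k : 'I_N) :
  ((i.+1 * j.+1)%:R * alpha ^+ 2) *: ('X_k * mderiv i (mderiv j (Qn N n))) =
  \sum_(m : {ffun 'I_N -> 'I_n.+1} | is_partn m)
     (cf m * (alpha ^+ 2 * (i.+1 * j.+1 * (m j * (m i - (i == j))))%:R))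
       *: mon (jnN i j k m).
Proof.
rewrite dQ raddf_sum mulr_sumr scaler_sumr; apply: eq_bigr => m _.
rewrite /= mderivZ mderiv_mon -!scalerAr mulX_mon !scalerA !natrM sc2.
by [].
Qed.

Lemma sc3 (R : comRingType) (A K c M : R) : (A * K) * (c * M) = c * (A * (K * M)).
Proof. by ring. Qed.

Lemma T3 N n :
  (alpha * (alpha - 1)) *: \sum_(k < N) ((k.+1 ^ 2)%:R : F) *: ('X_k * mderiv k (Qn N n)) =
  \sum_(k < N) \sum_(m : {ffun 'I_N -> 'I_n.+1} | is_partn m)
     (cf m * (alpha * (alpha - 1) * (k.+1 ^ 2 * m k)%:R)) *: mon (fun t => nat_of_ord (m t)).
Proof.
rewrite scaler_sumr; apply: eq_bigr => k _.
rewrite dQ mulr_sumr !scaler_sumr; apply: eq_bigr => m _.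
rewrite -scalerAr mulX_mon !scalerA.
case: (posnP (m k)) => [mk0|mk].
  by rewrite mk0 muln0 mulr0n !mulr0 !scale0r.
rewrite (eq_mon (w := fun t => nat_of_ord (m t))); last first.
  by move=> t; case: eqP => [->|] /=; [rewrite subnK | rewrite subn0 addn0].
by rewrite natrM sc3.
Qed.

Lemma reidx1 N n (i j k : 'I_N) (hk : (i + j + 1)%N = k) :
  \sum_(m : {ffun 'I_N -> 'I_n.+1} | is_partn m)
     (cf m * (alpha * (k.+1 * m k)%:R)) *: mon (spN i j k m)
  = \sum_(mu : {ffun 'I_N -> 'I_n.+1} | is_partn mu)
     (cf mu * (alpha ^+ 2 * (i.+1 * j.+1 * (mu j * (mu i - (i == j))))%:R))
       *: mon (fun t => nat_of_ord (mu t)).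
Proof. exact: (@reidx N n i j k hk (fun v w => @mon N w) (fun v v' w w' _ e => eq_mon e)). Qed.

Lemma reidx2 N n (i j k : 'I_N) (hk : (i + j + 1)%N = k) :
  \sum_(mu : {ffun 'I_N -> 'I_n.+1} | is_partn mu)
     (cf mu * (alpha ^+ 2 * (i.+1 * j.+1 * (mu j * (mu i - (i == j))))%:R))
       *: mon (jnN i j k mu)
  = \sum_(m : {ffun 'I_N -> 'I_n.+1} | is_partn m)
     (cf m * (alpha * (k.+1 * m k)%:R)) *: mon (fun t => nat_of_ord (m t)).
Proof.
symmetry; exact: (@reidx N n i j k hk (fun v w => @mon N v) (fun v v' w w' e _ => eq_mon e)).
Qed.

Lemma swap3 N n (P : pred {ffun 'I_N -> 'I_n.+1}) (c : {ffun 'I_N -> 'I_n.+1} -> F)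
  (f : 'I_N -> 'I_N -> 'I_N -> {ffun 'I_N -> 'I_n.+1} -> F)
  (G : {ffun 'I_N -> 'I_n.+1} -> {mpoly F[N]}) :
  \sum_(i < N) \sum_(j < N) \sum_(k < N | (i + j + 1)%N == k) \sum_(m | P m)
     (c m * f i j k m) *: G m =
  \sum_(m | P m) (c m * \sum_(i < N) \sum_(j < N) \sum_(k < N | (i + j + 1)%N == k) f i j k m) *: G m.
Proof.
transitivity (\sum_(m | P m) \sum_(i < N) \sum_(j < N) \sum_(k < N | (i + j + 1)%N == k)
     (c m * f i j k m) *: G m).
  rewrite [RHS]exchange_big; apply: eq_bigr => i _.
  rewrite [RHS]exchange_big; apply: eq_bigr => j _.
  by rewrite [RHS]exchange_big.
apply: eq_bigr => m _; rewrite mulr_sumr scaler_suml; apply: eq_bigr => i _.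
rewrite mulr_sumr scaler_suml; apply: eq_bigr => j _.
by rewrite mulr_sumr scaler_suml.
Qed.

Lemma swap1 N n (P : pred {ffun 'I_N -> 'I_n.+1}) (c : {ffun 'I_N -> 'I_n.+1} -> F)
  (f : 'I_N -> {ffun 'I_N -> 'I_n.+1} -> F)
  (G : {ffun 'I_N -> 'I_n.+1} -> {mpoly F[N]}) :
  \sum_(k < N) \sum_(m | P m) (c m * f k m) *: G m =
  \sum_(m | P m) (c m * \sum_(k < N) f k m) *: G m.
Proof.
rewrite exchange_big; apply: eq_bigr => m _.
by rewrite mulr_sumr scaler_suml.
Qed.

Lemma gen_id (R : comRingType) (a x y z w v : R) :
  x + z = w -> y + v = z -> a ^+ 2 * x + a * y + a * (a - 1) * z = a ^+ 2 * w - v * a.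
Proof. by move=> <- <-; ring. Qed.

Lemma scal_id N n (m : {ffun 'I_N -> 'I_n.+1}) : is_partn m -> (n <= N)%N ->
  \sum_(i < N) \sum_(j < N) \sum_(k < N | (i + j + 1)%N == k)
      (alpha ^+ 2 * (i.+1 * j.+1 * (m j * (m i - (i == j))))%:R)
  + \sum_(i < N) \sum_(j < N) \sum_(k < N | (i + j + 1)%N == k) (alpha * (k.+1 * m k)%:R)
  + \sum_(k < N) (alpha * (alpha - 1) * (k.+1 ^ 2 * m k)%:R)
  = alpha ^+ 2 * (n ^ 2)%:R - n%:R * alpha.
Proof.
move=> Pm hN.
have e1 : \sum_(i < N) \sum_(j < N) \sum_(k < N | (i + j + 1)%N == k)
      (alpha ^+ 2 * (i.+1 * j.+1 * (m j * (m i - (i == j))))%:R) =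
   alpha ^+ 2 * (\sum_(i < N) \sum_(j < N) \sum_(k < N | (i + j + 1)%N == k)
      (i.+1 * j.+1 * (m j * (m i - (i == j)))))%N%:R.
  under eq_bigr => i _ do under eq_bigr => j _ do rewrite -mulr_sumr -natr_sum.
  under eq_bigr => i _ do rewrite -mulr_sumr -natr_sum.
  by rewrite -mulr_sumr -natr_sum.
have e2 : \sum_(i < N) \sum_(j < N) \sum_(k < N | (i + j + 1)%N == k) (alpha * (k.+1 * m k)%:R) =
   alpha * (\sum_(i < N) \sum_(j < N) \sum_(k < N | (i + j + 1)%N == k) (k.+1 * m k))%N%:R.
  under eq_bigr => i _ do under eq_bigr => j _ do rewrite -mulr_sumr -natr_sum.
  under eq_bigr => i _ do rewrite -mulr_sumr -natr_sum.
  by rewrite -mulr_sumr -natr_sum.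
rewrite e1 e2 -mulr_sumr -natr_sum.
apply: gen_id; rewrite -natrD.
  by rewrite (N1 Pm hN).
by rewrite (N2 Pm).
Qed.

Unset Implicit Arguments.

Theorem lemma3p5 (n N : nat) (hn : (1 <= n)%N) (hN : (n <= N)%N) :
  Dop (Qn N n) = (alpha ^+ 2 * (n ^ 2)%:R - n%:R * alpha) *: Qn N n.
Proof.
have E1 : \sum_(i < N) \sum_(j < N) \sum_(k < N | (i + j + 1)%N == k)
      ((k.+1)%:R * alpha) *: ('X_i * 'X_j * mderiv k (Qn N n)) =
  \sum_(m : {ffun 'I_N -> 'I_n.+1} | is_partn m)
    (cf m * \sum_(i < N) \sum_(j < N) \sum_(k < N | (i + j + 1)%N == k)
       (alpha ^+ 2 * (i.+1 * j.+1 * (m j * (m i - (i == j))))%:R))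
    *: mon (fun t => nat_of_ord (m t)).
  transitivity (\sum_(i < N) \sum_(j < N) \sum_(k < N | (i + j + 1)%N == k)
    \sum_(m : {ffun 'I_N -> 'I_n.+1} | is_partn m)
      (cf m * (alpha ^+ 2 * (i.+1 * j.+1 * (m j * (m i - (i == j))))%:R))
      *: mon (fun t => nat_of_ord (m t))).
    apply: eq_bigr => i _; apply: eq_bigr => j _; apply: eq_bigr => k /eqP hk.
    by rewrite T1 (reidx1 n hk).
  exact: (swap3 (fun m => is_partn m) (@cf N n)
    (fun i j k m => alpha ^+ 2 * (i.+1 * j.+1 * (m j * (m i - (i == j))))%:R)
    (fun m => mon (fun t => nat_of_ord (m t)))).
have E2 : \sum_(i < N) \sum_(j < N) \sum_(k < N | (i + j + 1)%N == k)
      ((i.+1 * j.+1)%:R * alpha ^+ 2) *: ('X_k * mderiv i (mderiv j (Qn N n))) =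
  \sum_(m : {ffun 'I_N -> 'I_n.+1} | is_partn m)
    (cf m * \sum_(i < N) \sum_(j < N) \sum_(k < N | (i + j + 1)%N == k)
       (alpha * (k.+1 * m k)%:R))
    *: mon (fun t => nat_of_ord (m t)).
  transitivity (\sum_(i < N) \sum_(j < N) \sum_(k < N | (i + j + 1)%N == k)
    \sum_(m : {ffun 'I_N -> 'I_n.+1} | is_partn m)
      (cf m * (alpha * (k.+1 * m k)%:R))
      *: mon (fun t => nat_of_ord (m t))).
    apply: eq_bigr => i _; apply: eq_bigr => j _; apply: eq_bigr => k /eqP hk.
    by rewrite T2 (reidx2 n hk).
  exact: (swap3 (fun m => is_partn m) (@cf N n)
    (fun i j k m => alpha * (k.+1 * m k)%:R)
    (fun m => mon (fun t => nat_of_ord (m t)))).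
have E3 : (alpha * (alpha - 1)) *:
     \sum_(k < N) ((k.+1 ^ 2)%:R : F) *: ('X_k * mderiv k (Qn N n)) =
  \sum_(m : {ffun 'I_N -> 'I_n.+1} | is_partn m)
    (cf m * \sum_(k < N) (alpha * (alpha - 1) * (k.+1 ^ 2 * m k)%:R))
    *: mon (fun t => nat_of_ord (m t)).
  rewrite T3.
  exact: (swap1 (fun m => is_partn m) (@cf N n)
    (fun k m => alpha * (alpha - 1) * (k.+1 ^ 2 * m k)%:R)
    (fun m => mon (fun t => nat_of_ord (m t)))).
rewrite /Dop E1 E2 E3 -!big_split /= [in RHS]QnE scaler_sumr.
apply: eq_bigr => m Pm.
rewrite -!scalerDl -!mulrDr (scal_id Pm hN).
by rewrite scalerA mulrC.
Qed.
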